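(* For every non-empty partial metric space $(X,p_X)$ there exists a p-Cauchy completion $(\tilde X,i)$ of $X$ such that $i(X)$ is not symmetrically dense in $\tilde X$.
   Context: A partial metric on a set $X$ is a function $p_X\colon X\times X\to\mathbb{R}_{\geq0}$ such that for all $x,y,z\in X$: (P1) $p_X(x,x)=p_X(x,y)=p_X(y,y)$ implies $x=y$; (P2) $p_X(x,x)\leq p_X(x,y)$; (P3) $p_X(x,y)=p_X(y,x)$; (P4) $p_X(x,z)+p_X(y,y)\leq p_X(x,y)+p_X(y,z)$. For $x\in X$ and $\varepsilon>0$, $B_\varepsilon(x)=\{y\in X: p_X(x,y)<p_X(x,x)+\varepsilon\}$. A subset $A\subseteq X$ is dense in $X$ if for every $x\in X$ and $\varepsilon>0$ there is $y\in A$ with $y\in B_\varepsilon(x)$; it is symmetrically dense if for every $x\in X$ and $\varepsilon>0$ there is $y\in A$ with $x\in B_\varepsilon(y)$ and $y\in B_\varepsilon(x)$. A sequence $(x_n)$ in $X$ p-converges to $x\in X$ if $p_X(x,x)=\lim_{n\to\infty}p_X(x,x_n)=\lim_{n\to\infty}p_X(x_n,x_n)$; it is p-Cauchy if $\lim_{n,m\to\infty}p_X(x_n,x_m)$ exists and is finite. $X$ is p-Cauchy complete if every p-Cauchy sequence p-converges. An isometric embedding $i\colon X\to Y$ between partial metric spaces is a map with $p_Y(i(x),i(y))=p_X(x,y)$ for all $x,y$. A p-Cauchy completion of $X$ is a pair $(\bar X,i)$ where $\bar X$ is a p-Cauchy complete partial metric space and $i\colon X\to\bar X$ is an isometric embedding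 with $i(X)$ dense in $\bar X$. *)

(* Defs.v *)
From Stdlib Require Import Reals.
Open Scope R_scope.

Definition is_partial_metric {X : Type} (p : X -> X -> R) : Prop :=
  (forall x y, 0 <= p x y) /\
  (forall x y, p x x = p x y -> p x y = p y y -> x = y) /\
  (forall x y, p x x <= p x y) /\
  (forall x y, p x y = p y x) /\
  (forall x y z, p x z + p y y <= p x y + p y z).

Definition pball {X : Type} (p : X -> X -> R) (x : X) (eps : R) (y : X) : Prop :=
  p x y < p x x + eps.

Definition p_dense {X : Type} (p : X -> X -> R) (A : X -> Prop) : Prop :=
  forall x eps, 0 < eps -> exists y, A y /\ pball p x eps y.

Definition p_sym_dense {X : Type} (p : X -> X -> R) (A : X -> Prop) : Prop :=
  forall x eps, 0 < eps ->
    exists y, A y /\ pball p y eps x /\ pball p x eps y.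

Definition p_converges {X : Type} (p : X -> X -> R) (u : nat -> X) (x : X) : Prop :=
  Un_cv (fun n => p x (u n)) (p x x) /\ Un_cv (fun n => p (u n) (u n)) (p x x).

Definition p_Cauchy {X : Type} (p : X -> X -> R) (u : nat -> X) : Prop :=
  exists L : R, forall eps, 0 < eps -> exists N : nat,
    forall n m, (N <= n)%nat -> (N <= m)%nat -> Rabs (p (u n) (u m) - L) < eps.

Definition p_Cauchy_complete {X : Type} (p : X -> X -> R) : Prop :=
  forall u : nat -> X, p_Cauchy p u -> exists x, p_converges p u x.

Definition isometric_embedding {X Y : Type} (pX : X -> X -> R) (pY : Y -> Y -> R)
  (i : X -> Y) : Prop :=
  forall x y, pY (i x) (i y) = pX x y.

Definition image_of {X Y : Type} (i : X -> Y) (y : Y) : Prop := exists x, i x = y.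

Definition p_Cauchy_completion {X Y : Type} (pX : X -> X -> R) (pY : Y -> Y -> R)
  (i : X -> Y) : Prop :=
  is_partial_metric pY /\ p_Cauchy_complete pY /\
  isometric_embedding pX pY i /\ p_dense pY (image_of i).

(* Main.v *)
Require Import Defs.
From Stdlib Require Import Reals Lra Lia Classical ClassicalEpsilon ProofIrrelevance FunctionalExtensionality.
Open Scope R_scope.

Lemma cv_le_ev (a : nat -> R) l c N :
  Un_cv a l -> (forall n, (N <= n)%nat -> a n <= c) -> l <= c.
Proof.
  intros Ha Hb. destruct (Rle_or_lt l c) as [|Hlt]; auto.
  destruct (Ha (l - c)) as [M HM]; [lra|].
  specialize (HM (max N M) ltac:(lia)). specialize (Hb (max N M) ltac:(lia)).
  unfold Rdist in HM. apply Rabs_def2 in HM. lra.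
Qed.

Lemma cv_ge_ev (a : nat -> R) l c N :
  Un_cv a l -> (forall n, (N <= n)%nat -> c <= a n) -> c <= l.
Proof.
  intros Ha Hb. destruct (Rle_or_lt c l) as [|Hlt]; auto.
  destruct (Ha (c - l)) as [M HM]; [lra|].
  specialize (HM (max N M) ltac:(lia)). specialize (Hb (max N M) ltac:(lia)).
  unfold Rdist in HM. apply Rabs_def2 in HM. lra.
Qed.

Lemma cv_const c : Un_cv (fun _ => c) c.
Proof. intros eps He. exists 0%nat. intros. unfold Rdist. rewrite Rminus_diag, Rabs_R0. lra. Qed.

Lemma Un_cv_ext (a b : nat -> R) l : (forall n, a n = b n) -> Un_cv a l -> Un_cv b l.
Proof. intros E H eps He. destruct (H eps He) as [N HN]. exists N. intros n Hn. rewrite <- E. auto. Qed.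

Definition dlim (a : nat -> nat -> R) (L : R) : Prop :=
  forall eps, 0 < eps -> exists N : nat,
    forall n m, (N <= n)%nat -> (N <= m)%nat -> Rabs (a n m - L) < eps.

Lemma dlim_diag a L : dlim a L -> Un_cv (fun n => a n n) L.
Proof. intros H eps He. destruct (H eps He) as [N HN]. exists N. intros n Hn. apply HN; lia. Qed.

Lemma close_eq x y : (forall eps, 0 < eps -> Rabs (x - y) < eps) -> x = y.
Proof.
  intros H. destruct (Req_dec x y) as [|Hne]; auto.
  assert (0 < Rabs (x - y)) by (apply Rabs_pos_lt; lra).
  specialize (H _ H0). lra.
Qed.

Section PM.
Variable X : Type.
Variable p : X -> X -> R.
Hypothesis Hp : is_partial_metric p.

Lemma pm_nn x y : 0 <= p x y. Proof. apply Hp. Qed.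
Lemma pm_sep x y : p x x = p x y -> p x y = p y y -> x = y. Proof. apply Hp. Qed.
Lemma pm_self x y : p x x <= p x y. Proof. apply Hp. Qed.
Lemma pm_sym x y : p x y = p y x. Proof. apply Hp. Qed.
Lemma pm_tri x y z : p x z + p y y <= p x y + p y z. Proof. apply Hp. Qed.

Lemma four (u v : nat -> X) n m n' m' :
  p (u n) (v m) - p (u n') (v m') <=
  (p (u n) (u n') - p (u n') (u n')) + (p (v m') (v m) - p (v m') (v m')).
Proof.
  pose proof (pm_tri (u n) (u n') (v m)).
  pose proof (pm_tri (u n') (v m') (v m)). lra.
Qed.

Lemma cauchy_small u : p_Cauchy p u -> forall eps, 0 < eps -> exists N : nat,
  forall n m, (N <= n)%nat -> (N <= m)%nat -> p (u n) (u m) - p (u m) (u m) < eps.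
Proof.
  intros [L HL] eps He. destruct (HL (eps/2)) as [N HN]; [lra|]. exists N.
  intros n m Hn Hm. pose proof (HN n m Hn Hm). pose proof (HN m m Hm Hm).
  apply Rabs_def2 in H. apply Rabs_def2 in H0. lra.
Qed.

Lemma crit u v : p_Cauchy p u -> p_Cauchy p v -> Cauchy_crit (fun n => p (u n) (v n)).
Proof.
  intros Hu Hv eps He.
  destruct (cauchy_small u Hu (eps/2)) as [N1 H1]; [lra|].
  destruct (cauchy_small v Hv (eps/2)) as [N2 H2]; [lra|].
  exists (max N1 N2). intros n m Hn Hm. unfold Rdist.
  pose proof (four u v n n m m). pose proof (four u v m m n n).
  pose proof (H1 n m ltac:(lia) ltac:(lia)). pose proof (H1 m n ltac:(lia) ltac:(lia)).
  pose proof (H2 n m ltac:(lia) ltac:(lia)). pose proof (H2 m n ltac:(lia) ltac:(lia)).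
  rewrite (pm_sym (v m) (v n)) in *. apply Rabs_def1; lra.
Qed.

Lemma dlim_of u v D : p_Cauchy p u -> p_Cauchy p v ->
  Un_cv (fun n => p (u n) (v n)) D -> dlim (fun n m => p (u n) (v m)) D.
Proof.
  intros Hu Hv HD eps He.
  destruct (cauchy_small u Hu (eps/4)) as [N1 H1]; [lra|].
  destruct (cauchy_small v Hv (eps/4)) as [N2 H2]; [lra|].
  destruct (HD (eps/2)) as [N3 H3]; [lra|].
  set (N := max N1 (max N2 N3)). exists N. intros n m Hn Hm.
  pose proof (four u v n m N N). pose proof (four u v N N n m).
  pose proof (H1 n N ltac:(lia) ltac:(lia)). pose proof (H1 N n ltac:(lia) ltac:(lia)).
  pose proof (H2 m N ltac:(lia) ltac:(lia)). pose proof (H2 N m ltac:(lia) ltac:(lia)).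
  rewrite (pm_sym (v N) (v m)) in *. pose proof (H3 N ltac:(lia)) as H9. unfold Rdist in H9. apply Rabs_def2 in H9.
  apply Rabs_def1; lra.
Qed.


Definition isrep (g : X -> R) (u : nat -> X) : Prop :=
  p_Cauchy p u /\ forall x, Un_cv (fun n => p x (u n)) (g x).

Definition CY := {g : X -> R | exists u, isrep g u}.

Definition glbP (g h : X -> R) (r : R) : Prop :=
  (forall x, r <= g x + h x - p x x) /\
  (forall eps, 0 < eps -> exists x, g x + h x - p x x < r + eps).

Definition pY (a b : CY) : R := epsilon (inhabits 0) (glbP (proj1_sig a) (proj1_sig b)).

Lemma glb_unique g h r1 r2 : glbP g h r1 -> glbP g h r2 -> r1 = r2.
Proof.
  intros [A1 B1] [A2 B2].
  destruct (Rtotal_order r1 r2) as [Hl|[He|Hl]]; auto.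
  - destruct (B1 (r2 - r1)) as [x Hx]; [lra|]. specialize (A2 x). lra.
  - destruct (B2 (r1 - r2)) as [x Hx]; [lra|]. specialize (A1 x). lra.
Qed.

Lemma char g h u v D : isrep g u -> isrep h v ->
  Un_cv (fun n => p (u n) (v n)) D -> glbP g h D.
Proof.
  intros [Hu Hgu] [Hv Hhv] HD. split.
  - intros x. apply (@Rle_cv_lim (fun n => p (u n) (v n))
      (fun n => p x (u n) + p x (v n) - p x x) D); auto.
    + intros n. pose proof (pm_tri (u n) x (v n)). rewrite (pm_sym (u n) x) in H. lra.
    + apply CV_minus; [apply CV_plus; auto| apply cv_const].
  - intros eps He.
    pose proof Hu as [L HL].
    pose proof (dlim_of u v D Hu Hv HD) as Huv.
    destruct (HL (eps/4)) as [N1 H1]; [lra|].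
    destruct (Huv (eps/4)) as [N2 H2]; [lra|].
    set (N := max N1 N2). exists (u N).
    assert (g (u N) <= L + eps/4).
    { apply (cv_le_ev _ _ _ N (Hgu (u N))). intros n Hn.
      pose proof (H1 N n ltac:(lia) ltac:(lia)). apply Rabs_def2 in H. lra. }
    assert (h (u N) <= D + eps/4).
    { apply (cv_le_ev _ _ _ N (Hhv (u N))). intros n Hn.
      pose proof (H2 N n ltac:(lia) ltac:(lia)). apply Rabs_def2 in H0. simpl in H0. lra. }
    pose proof (H1 N N ltac:(lia) ltac:(lia)). apply Rabs_def2 in H3. lra.
Qed.

Lemma pY_cv (a b : CY) u v : isrep (proj1_sig a) u -> isrep (proj1_sig b) v ->
  Un_cv (fun n => p (u n) (v n)) (pY a b).
Proof.
  intros Ha Hb.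
  destruct (R_complete _ (crit u v (proj1 Ha) (proj1 Hb))) as [D HD].
  assert (G : glbP (proj1_sig a) (proj1_sig b) D) by (eapply char; eauto).
  assert (G' : glbP (proj1_sig a) (proj1_sig b) (pY a b)).
  { unfold pY. apply epsilon_spec. eauto. }
  rewrite (glb_unique _ _ _ _ G' G). auto.
Qed.

Lemma rep_of (a : CY) : exists u, isrep (proj1_sig a) u.
Proof. apply (proj2_sig a). Qed.

Lemma CY_pm : is_partial_metric pY.
Proof.
  split; [|split; [|split; [|split]]].
  - intros a b. destruct (rep_of a) as [u Hu]. destruct (rep_of b) as [v Hv].
    apply (cv_ge_ev _ _ _ 0 (pY_cv a b u v Hu Hv)). intros. apply pm_nn.
  - intros [g Hg] [h Hh] E1 E2.
    destruct Hg as [u Hu]. destruct Hh as [v Hv].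
    set (a := exist _ g (ex_intro _ u Hu) : CY) in *.
    set (b := exist _ h (ex_intro _ v Hv) : CY) in *.
    assert (Hs : pY a b = pY b a).
    { apply (UL_sequence (fun n => p (u n) (v n))). apply (pY_cv a b u v Hu Hv).
      apply (Un_cv_ext (fun n => p (v n) (u n))). intros; apply pm_sym.
      apply (pY_cv b a v u Hv Hu). }
    assert (Hgh : forall x, g x = h x).
    { intros x. apply Rle_antisym.
      - enough (g x <= h x + pY b a - pY b b) by lra.
        apply (@Rle_cv_lim (fun n => p x (u n)) (fun n => p x (v n) + p (v n) (u n) - p (v n) (v n))
          (g x) (h x + pY b a - pY b b)); [| apply (proj2 Hu) |].
        + intros n. pose proof (pm_tri x (v n) (u n)). lra.
        + apply CV_minus; [apply CV_plus|]. apply (proj2 Hv). apply (pY_cv b a v u Hv Hu).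
          apply (pY_cv b b v v Hv Hv).
      - enough (h x <= g x + pY a b - pY a a) by lra.
        apply (@Rle_cv_lim (fun n => p x (v n)) (fun n => p x (u n) + p (u n) (v n) - p (u n) (u n))
          (h x) (g x + pY a b - pY a a)); [| apply (proj2 Hv) |].
        + intros n. pose proof (pm_tri x (u n) (v n)). lra.
        + apply CV_minus; [apply CV_plus|]. apply (proj2 Hu). apply (pY_cv a b u v Hu Hv).
          apply (pY_cv a a u u Hu Hu). }
    apply functional_extensionality in Hgh. subst h.
    apply subset_eq_compat. reflexivity.
  - intros a b. destruct (rep_of a) as [u Hu]. destruct (rep_of b) as [v Hv].
    apply (@Rle_cv_lim _ _ _ _ (fun n => pm_self (u n) (v n)) (pY_cv a a u u Hu Hu) (pY_cv a b u v Hu Hv)).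
  - intros a b. destruct (rep_of a) as [u Hu]. destruct (rep_of b) as [v Hv].
    apply (UL_sequence (fun n => p (u n) (v n))). apply (pY_cv a b u v Hu Hv).
    apply (Un_cv_ext (fun n => p (v n) (u n))). intros; apply pm_sym.
    apply (pY_cv b a v u Hv Hu).
  - intros a b c. destruct (rep_of a) as [u Hu]. destruct (rep_of b) as [v Hv].
    destruct (rep_of c) as [w Hw].
    apply (@Rle_cv_lim (fun n => p (u n) (w n) + p (v n) (v n))
                      (fun n => p (u n) (v n) + p (v n) (w n))).
    + intros n; apply pm_tri.
    + apply CV_plus; [apply (pY_cv a c u w Hu Hw) | apply (pY_cv b b v v Hv Hv)].
    + apply CV_plus; [apply (pY_cv a b u v Hu Hv) | apply (pY_cv b c v w Hv Hw)].
Qed.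


Lemma const_cauchy x : p_Cauchy p (fun _ => x).
Proof.
  exists (p x x). intros eps He. exists 0%nat. intros. rewrite Rminus_diag, Rabs_R0. lra.
Qed.

Lemma const_rep x : isrep (fun z => p z x) (fun _ => x).
Proof. split. apply const_cauchy. intros z. apply cv_const. Qed.

Definition iY (x : X) : CY := exist _ (fun z => p z x) (ex_intro _ _ (const_rep x)).

Lemma iY_iso : isometric_embedding p pY iY.
Proof.
  intros x y. apply (UL_sequence (fun _ => p x y)).
  apply (pY_cv (iY x) (iY y) _ _ (const_rep x) (const_rep y)). apply cv_const.
Qed.

Lemma pY_i (a : CY) u z : isrep (proj1_sig a) u -> pY a (iY z) = proj1_sig a z.
Proof.
  intros Hu. apply (UL_sequence (fun n => p (u n) z)).
  apply (pY_cv a (iY z) u _ Hu (const_rep z)).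
  apply (Un_cv_ext (fun n => p z (u n))). intros; apply pm_sym. apply (proj2 Hu).
Qed.

Lemma pY_self (a : CY) u L : isrep (proj1_sig a) u ->
  dlim (fun n m => p (u n) (u m)) L -> pY a a = L.
Proof.
  intros Hu HL. apply (UL_sequence (fun n => p (u n) (u n))).
  apply (pY_cv a a u u Hu Hu). apply (dlim_diag _ _ HL).
Qed.

Lemma rep_near (g : X -> R) u L : isrep g u -> dlim (fun n m => p (u n) (u m)) L ->
  forall eps, 0 < eps -> exists N : nat, forall n, (N <= n)%nat -> Rabs (g (u n) - L) < eps.
Proof.
  intros [Hu Hg] HL eps He. destruct (HL (eps/2)) as [N HN]; [lra|]. exists N.
  intros n Hn.
  assert (g (u n) <= L + eps/2).
  { apply (cv_le_ev _ _ _ N (Hg (u n))). intros m Hm.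
    pose proof (HN n m Hn Hm). apply Rabs_def2 in H. lra. }
  assert (L - eps/2 <= g (u n)).
  { apply (cv_ge_ev _ _ _ N (Hg (u n))). intros m Hm.
    pose proof (HN n m Hn Hm). apply Rabs_def2 in H0. lra. }
  apply Rabs_def1; lra.
Qed.

Lemma CY_dense : forall (a : CY) eps, 0 < eps -> exists x,
  pY a (iY x) < pY a a + eps /\ pY a a - eps < pY (iY x) (iY x).
Proof.
  intros a eps He. destruct (rep_of a) as [u Hu].
  pose proof (proj1 Hu) as [L HL].
  rewrite (pY_self a u L Hu HL).
  destruct (rep_near _ u L Hu HL eps He) as [N1 H1].
  destruct (HL eps He) as [N2 H2].
  exists (u (max N1 N2)). rewrite (pY_i a u _ Hu), iY_iso.
  pose proof (H1 (max N1 N2) ltac:(lia)). pose proof (H2 (max N1 N2) (max N1 N2) ltac:(lia) ltac:(lia)).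
  apply Rabs_def2 in H. apply Rabs_def2 in H0. lra.
Qed.

Lemma CY_conv : forall u : nat -> X, p_Cauchy pY (fun n => iY (u n)) ->
  exists z, p_converges pY (fun n => iY (u n)) z.
Proof.
  intros u HuY.
  assert (Hu : p_Cauchy p u).
  { destruct HuY as [L HL]. exists L. intros eps He. destruct (HL eps He) as [N HN].
    exists N. intros n m Hn Hm. rewrite <- iY_iso. auto. }
  set (g := fun x => proj1_sig (R_complete _ (crit (fun _ => x) u (const_cauchy x) Hu))).
  assert (Hrep : isrep g u).
  { split; auto. intros x. unfold g. destruct (R_complete _ _) as [l Hl]. simpl. exact Hl. }
  set (a := exist _ g (ex_intro _ u Hrep) : CY).
  exists a. pose proof Hu as [L HL].
  unfold p_converges. rewrite (pY_self a u L Hrep HL). split.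
  - apply (Un_cv_ext (fun n => g (u n))).
    + intros n. symmetry. apply (pY_i a u (u n) Hrep).
    + intros eps He. destruct (rep_near g u L Hrep HL eps He) as [N HN]. exists N.
      intros n Hn. apply HN. lia.
  - apply (Un_cv_ext (fun n => p (u n) (u n))).
    + intros n. symmetry. apply iY_iso.
    + apply (dlim_diag _ _ HL).
Qed.

End PM.

Section Abs.
Variable Y : Type.
Variable q : Y -> Y -> R.
Hypothesis Hq : is_partial_metric q.
Variable X : Type.
Variable j : X -> Y.
Hypothesis Hconv : forall u : nat -> X, p_Cauchy q (fun n => j (u n)) ->
  exists z, p_converges q (fun n => j (u n)) z.
Hypothesis Hdens : forall y eps, 0 < eps -> exists x,
  q y (j x) < q y y + eps /\ q y y - eps < q (j x) (j x).

Lemma inv_pos k : 0 < / INR (S k).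
Proof. apply Rinv_0_lt_compat. apply lt_0_INR. lia. Qed.

Lemma inv_small eps : 0 < eps -> exists N : nat, forall k, (N <= k)%nat -> / INR (S k) < eps.
Proof.
  intros He. destruct (archimed_cor1 eps He) as [N [HN HN0]]. exists N. intros k Hk.
  apply Rle_lt_trans with (/ INR N); auto.
  apply Rinv_le_contravar. apply lt_0_INR; lia. apply le_INR. lia.
Qed.

Lemma abs_complete : p_Cauchy_complete q.
Proof.
  intros s [L HL].
  pose (xs := fun k => proj1_sig (constructive_indefinite_description _ (Hdens (s k) _ (inv_pos k)))).
  assert (Hxs : forall k, q (s k) (j (xs k)) < q (s k) (s k) + / INR (S k) /\
                          q (s k) (s k) - / INR (S k) < q (j (xs k)) (j (xs k))).
  { intros k. unfold xs. destruct (constructive_indefinite_description _ _) as [x Hx]. exact Hx. }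
  set (a := fun k => j (xs k)).
  set (e := fun k => / INR (S k)).
  assert (Bnd : forall k l, q (a k) (a l) - q (s k) (s l) <= 2 * (e k + e l) /\ q (s k) (s l) - q (a k) (a l) <= 2 * (e k + e l)).
  { intros k l. destruct (Hxs k) as [A1 A2]. destruct (Hxs l) as [B1 B2].
    fold (a k) (a l) (e k) (e l) in A1, A2, B1, B2.
    pose proof (pm_tri Y q Hq (a k) (s k) (a l)).
    pose proof (pm_tri Y q Hq (s k) (s l) (a l)).
    pose proof (pm_tri Y q Hq (s k) (a k) (s l)).
    pose proof (pm_tri Y q Hq (a k) (a l) (s l)).
    pose proof (pm_sym Y q Hq (a k) (s k)). pose proof (pm_sym Y q Hq (a l) (s l)).
    split; lra. }
  assert (Ha : dlim (fun n m => q (a n) (a m)) L).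
  { intros eps He. destruct (HL (eps/2)) as [N1 H1]; [lra|].
    destruct (inv_small (eps/8)) as [N2 H2]; [lra|].
    exists (max N1 N2). intros n m Hn Hm.
    pose proof (H1 n m ltac:(lia) ltac:(lia)). pose proof (Bnd n m).
    pose proof (H2 n ltac:(lia)). pose proof (H2 m ltac:(lia)). fold (e n) (e m) in H3, H4.
    apply Rabs_def2 in H. destruct H0 as [H0a H0b].
    apply Rabs_def1; lra. }
  destruct (Hconv xs (ex_intro _ L Ha)) as [z [Hz1 Hz2]].
  change (Un_cv (fun n => q z (a n)) (q z z)) in Hz1.
  change (Un_cv (fun n => q (a n) (a n)) (q z z)) in Hz2.
  assert (HzL : q z z = L).
  { apply (UL_sequence (fun n => q (a n) (a n))); auto. apply (dlim_diag _ _ Ha). }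
  exists z. split.
  - intros eps He. destruct (Hz1 (eps/2)) as [N1 H1]; [lra|].
    destruct (inv_small (eps/4)) as [N2 H2]; [lra|].
    exists (max N1 N2). intros n Hn.
    pose proof (H1 n ltac:(lia)). pose proof (H2 n ltac:(lia)). fold (e n) in H0.
    destruct (Hxs n) as [A1 A2]. fold (a n) (e n) in A1, A2.
    pose proof (pm_tri Y q Hq z (a n) (s n)).
    pose proof (pm_tri Y q Hq z (s n) (a n)).
    pose proof (pm_sym Y q Hq (a n) (s n)).
    unfold Rdist in *. apply Rabs_def2 in H. apply Rabs_def1; lra.
  - rewrite HzL. apply (dlim_diag _ _ HL).
Qed.

End Abs.

Section Ext.
Variable Y : Type.
Variable q : Y -> Y -> R.
Hypothesis Hq : is_partial_metric q.
Hypothesis Hc : p_Cauchy_complete q.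
Variable a : Y.

Definition qT (s t : Y + unit) : R :=
  match s, t with
  | inl y, inl y' => q y y'
  | inl y, inr _ => q a y + 1
  | inr _, inl y => q a y + 1
  | inr _, inr _ => q a a + 1
  end.

Lemma qT_pm : is_partial_metric qT.
Proof.
  pose proof (pm_nn Y q Hq) as Nn. pose proof (pm_sep Y q Hq) as Sp.
  pose proof (pm_self Y q Hq) as Sf. pose proof (pm_sym Y q Hq) as Sy.
  pose proof (pm_tri Y q Hq) as Tr.
  split; [|split; [|split; [|split]]].
  - intros [x|[]] [y|[]]; simpl; try apply Nn; try (pose proof (Nn a x); lra);
      try (pose proof (Nn a y); lra); pose proof (Nn a a); lra.
  - intros [x|[]] [y|[]]; simpl; intros E1 E2.
    + f_equal; auto.
    + pose proof (Sf x a). rewrite (Sy x a) in H. lra.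
    + pose proof (Sf y a). rewrite (Sy y a) in H. lra.
    + reflexivity.
  - intros [x|[]] [y|[]]; simpl; auto.
    + pose proof (Sf x a). rewrite (Sy x a) in H. lra.
    + pose proof (Sf a y). lra.
    + lra.
  - intros [x|[]] [y|[]]; simpl; auto.
  - intros [x|[]] [y|[]] [z|[]]; simpl; auto.
    + pose proof (Tr a y x). rewrite (Sy y x) in H. lra.
    + pose proof (Tr x a z). rewrite (Sy x a) in H. lra.
    + lra.
    + pose proof (Tr a y z). lra.
    + pose proof (Sf a y). pose proof (Sf y a). rewrite (Sy y a) in H0. lra.
    + lra.
    + lra.
Qed.

Lemma qT_complete : p_Cauchy_complete qT.
Proof.
  intros u [L HL].
  destruct (classic (forall N, exists n, (N <= n)%nat /\ u n = inr tt)) as [HA|HB].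
  - assert (Ht : q a a + 1 = L).
    { apply close_eq. intros eps He. destruct (HL eps He) as [N HN].
      destruct (HA N) as [n [Hn Eu]]. specialize (HN n n Hn Hn). rewrite Eu in HN. exact HN. }
    exists (inr tt). split.
    + intros eps He. destruct (HL eps He) as [N HN]. exists N. intros n Hn.
      destruct (HA N) as [m [Hm Eu]]. specialize (HN m n Hm ltac:(lia)).
      rewrite Eu in HN. unfold Rdist. rewrite <- Ht in HN. exact HN.
    + simpl. rewrite Ht. apply (dlim_diag _ _ HL).
  - apply not_all_ex_not in HB. destruct HB as [N HN].
    assert (HN' : forall n, (N <= n)%nat -> u n <> inr tt).
    { intros n Hn E. apply HN. exists n. auto. }
    set (w := fun k => match u (k + N)%nat with inl y => y | inr _ => a end).
    assert (Hw : forall k, u (k + N)%nat = inl (w k)).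
    { intros k. unfold w. destruct (u (k + N)%nat) as [y|[]] eqn:E; auto.
      exfalso. apply (HN' (k + N)%nat); auto. lia. }
    assert (Hwc : p_Cauchy q w).
    { exists L. intros eps He. destruct (HL eps He) as [M HM]. exists M.
      intros k l Hk Hl. specialize (HM (k + N)%nat (l + N)%nat ltac:(lia) ltac:(lia)).
      rewrite !Hw in HM. exact HM. }
    destruct (Hc w Hwc) as [z [Hz1 Hz2]].
    exists (inl z). split; simpl.
    + intros eps He. destruct (Hz1 eps He) as [M HM]. exists (M + N)%nat. intros n Hn.
      replace n with ((n - N) + N)%nat by lia. rewrite Hw. simpl. apply HM. lia.
    + intros eps He. destruct (Hz2 eps He) as [M HM]. exists (M + N)%nat. intros n Hn.
      replace n with ((n - N) + N)%nat by lia. rewrite Hw. simpl. apply HM. lia.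
Qed.

End Ext.

Theorem theorem1p4 (X : Type) (pX : X -> X -> R) :
  is_partial_metric pX -> inhabited X ->
  exists (Y : Type) (pY : Y -> Y -> R) (i : X -> Y),
    p_Cauchy_completion pX pY i /\ ~ p_sym_dense pY (image_of i).
Proof.
  intros Hp [x0].
  pose proof (CY_pm X pX Hp) as HY.
  assert (HYc : p_Cauchy_complete (pY X pX)).
  { apply (abs_complete _ _ HY X (iY X pX)).
    - apply CY_conv; auto.
    - apply CY_dense; auto. }
  set (a := iY X pX x0).
  exists (CY X pX + unit)%type, (qT _ (pY X pX) a), (fun x => inl (iY X pX x)).
  split; [split; [|split; [|split]]|].
  - apply qT_pm; auto.
  - apply qT_complete; auto.
  - intros x y. simpl. apply iY_iso; auto.
  - intros [y|[]] eps He.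
    + destruct (CY_dense X pX Hp y eps He) as [x [Hx _]].
      exists (inl (iY X pX x)). split. exists x; reflexivity. unfold pball. simpl. exact Hx.
    + exists (inl a). split. exists x0; reflexivity. unfold pball. simpl. lra.
  - intros H. destruct (H (inr tt) 1 ltac:(lra)) as [y [[x Ex] [H1 H2]]].
    subst y. unfold pball in H1. simpl in H1.
    pose proof (pm_self _ _ HY (iY X pX x) a). rewrite (pm_sym _ _ HY (iY X pX x) a) in H0. lra.
Qed.
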